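(* Let $N>K$ and let $\mathbf{d}_u=(d_1,\dots,d_K)$ be a demand vector with pairwise distinct entries. Let the cache configuration $\mathcal{C}$ be produced by the old placement scheme with $F$ packets per file, and let $t=KM/N$. If $$F\le \frac{N/M}{2K}\left(1-\frac{1}{N/M}\right)\exp\!\left(2t\Big(1-\frac{t}{K}\Big)\Big(1-\frac1K\Big)\right),$$ then $$\mathbb{E}\big[R^{nd}(\mathcal{C},\mathbf{d}_u)\big]\ge \frac12\Big(1-\frac{M}{N}\Big)K,$$ where the expectation is over the random placement.
   Context: Setting: a server holds a library of $N$ files, each split into $F$ packets (packet $f$ of file $n$ denoted $(n,f)$); $K$ users each have a cache holding $M$ files' worth of packets ($M\le N$). For a cache configuration, $S_{n,f}\subseteq[1:K]$ denotes the set of users whose cache stores packet $(n,f)$. User $k$ requests file $d_k$. Old placement scheme (with $MF/N$ an integer): for every user $k$ and every file $n$, a subset of $MF/N$ of the $F$ packets of file $n$ is chosen uniformly at random and stored in user $k$'s cache; all choices are mutually independent. Delivery scheme and its rate $R^{nd}$: for $k\in[1:K]$ and $T\subseteq[1:K]\setminus\{k\}$, let $V_{k,T}$ be the set of packets $f$ of file $d_k$ with $S_{d_k,f}=T$ exactly. For every nonempty $\mathcal{S}\subseteq[1:K]$ the scheme transmits the XOR of the packet vectors $V_{k,\mathcal{S}\setminus\{k\}}$, $k\in\mathcal{S}$ (shorter vectors zero-padded to the longest). Its normalized number of transmissions is $$R^{nd}(\mathcal{C},\mathbf{d})=\sum_{\emptyset\ne\mathcal{S}\subseteq[1:K]}\frac{\max_{k\in\mathcal{S}}|V_{k,\mathcal{S}\setminus\{k\}}|}{F}.$$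 *)

(* Defs.v *)
From HB Require Import structures.
From mathcomp Require Import all_boot all_order all_algebra.
From mathcomp Require Import all_classical all_reals all_analysis.
Set Implicit Arguments. Unset Strict Implicit. Unset Printing Implicit Defensive.
Import Order.TTheory GRing.Theory Num.Theory.
Local Open Scope ring_scope.

(* A cache configuration: for user k and file n, the set of packets of file n
   stored in the cache of user k. Users are 'I_K, files 'I_N, packets 'I_F. *)
Definition config (K N F : nat) := {ffun 'I_K * 'I_N -> {set 'I_F}}.

Definition S_set (K N F : nat) (C : config K N F) (n : 'I_N) (f : 'I_F)
  : {set 'I_K} := [set k | f \in C (k, n)].

Definition V_set (K N F : nat) (C : config K N F) (d : 'I_K -> 'I_N)
  (k : 'I_K) (T : {set 'I_K}) : {set 'I_F} :=
  [set f | S_set C (d k) f == T].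

Definition Rnd (R : numFieldType) (K N F : nat) (C : config K N F)
  (d : 'I_K -> 'I_N) : R :=
  \sum_(S : {set 'I_K} | S != finset.set0)
     ((\max_(k in S) #|V_set C d k (S :\ k)|)%N)%:R / F%:R.

(* Old placement scheme with L = MF/N packets per (user, file): each user
   stores, independently for each file, a uniformly random L-subset of the
   F packets.  The product of these independent uniform choices is the
   uniform distribution on the following set of configurations. *)
Definition old_placement (K N F L : nat) : {set config K N F} :=
  [set C : config K N F | [forall p, #|C p| == L]].

Definition expected_Rnd (R : numFieldType) (K N F L : nat)
  (d : 'I_K -> 'I_N) : R :=
  (\sum_(C in old_placement K N F L) Rnd R C d)
    / (#|old_placement K N F L|)%:R.

(* Main.v *)
Require Import Defs.
From HB Require Import structures.
From mathcomp Require Import all_boot all_order all_algebra.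
From mathcomp Require Import all_classical all_reals all_analysis.
From mathcomp Require Import ring lra.
Import Order.TTheory GRing.Theory Num.Theory.
Set Implicit Arguments. Unset Strict Implicit. Unset Printing Implicit Defensive.

Local Open Scope ring_scope.

Definition Dset (F L : nat) : {set {set 'I_F}} := [set A : {set 'I_F} | #|A| == L].

Lemma sum_place_prod (R : realType) (K N F L : nat)
  (G : 'I_K * 'I_N -> {set 'I_F} -> R) :
  \sum_(C in old_placement K N F L) \prod_p G p (C p)
  = \prod_p \sum_(A in Dset F L) G p A.
Proof.
rewrite bigA_distr_big.
apply: eq_bigl => C; rewrite !inE.
apply/forallP/ffun_onP => H x; have := H x; by rewrite !inE.
Qed.

Lemma card_place (R : realType) (K N F L : nat) :
  (#|old_placement K N F L|%:R : R) = \prod_(p : 'I_K * 'I_N) (#|Dset F L|%:R : R).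
Proof.
rewrite -sum1_card natr_sum.
transitivity (\sum_(C in old_placement K N F L) \prod_(p : 'I_K * 'I_N) (1:R)).
  by apply: eq_bigr => C _; rewrite big1.
rewrite (@sum_place_prod R K N F L (fun _ _ => (1:R))); apply: eq_bigr => p _.
by rewrite sumr_const.
Qed.

Lemma exp_prod (R : realType) (K N F L : nat)
  (G : 'I_K * 'I_N -> {set 'I_F} -> R) :
  (\sum_(C in old_placement K N F L) \prod_p G p (C p)) / #|old_placement K N F L|%:R
  = \prod_p (\sum_(A in Dset F L) G p A / #|Dset F L|%:R).
Proof.
rewrite sum_place_prod card_place -prodf_div; apply: eq_bigr => p _.
by rewrite mulr_suml.
Qed.

Lemma card_Dset F L : #|Dset F L| = 'C(F, L).
Proof. by rewrite /Dset card_draws card_ord. Qed.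

Lemma sum_bool_card (T : finType) (D : {set T}) (b : pred T) :
  \sum_(A in D) (b A : nat) = #|[set A | (A \in D) && b A]|.
Proof.
rewrite -sum1dep_card big_mkcondr /=; apply: eq_bigr => A _.
by case: (b A).
Qed.

Lemma cnt_notin F L (f : 'I_F) :
  \sum_(A in Dset F L) ((f \notin A) : nat) = 'C(F.-1, L).
Proof.
rewrite sum_bool_card.
have -> : 'C(F.-1, L) = 'C(#|[set~ f]|, L) by rewrite cardsC1 card_ord.
rewrite -cards_draws.
apply: eq_card => A; rewrite !inE andbC; congr (_ && _).
apply/idP/idP => [fA|/fintype.subsetP H]; first by apply/fintype.subsetP => x xA; rewrite in_setC1; apply: contraNneq fA => <-.
by apply/negP => /H; rewrite in_setC1 eqxx.
Qed.

Lemma avg_ind (R : realType) F L (f : 'I_F) (b : bool) : (L <= F)%N ->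
  \sum_(A in Dset F L) (((f \in A) == b) : nat)%:R / (#|Dset F L|%:R : R)
  = if b then L%:R / F%:R else 1 - L%:R / F%:R.
Proof.
move=> hLF.
have F0 : (0 < F)%N by case: F f hLF => [[]|].
have hC : (0 < 'C(F, L))%N by rewrite bin_gt0.
have hd : (F * 'C(F.-1, L) = (F - L) * 'C(F, L))%N by rewrite mul_bin_down.
have hnot : \sum_(A in Dset F L) (((f \in A) == false) : nat)%:R = ('C(F.-1, L))%:R :> R.
  rewrite -natr_sum -(cnt_notin L f); congr (_%:R); apply: eq_bigr => A _; by case: (f \in A).
have hall : \sum_(A in Dset F L) (((f \in A) == true) : nat)%:R +
           \sum_(A in Dset F L) (((f \in A) == false) : nat)%:R = #|Dset F L|%:R :> R.
  rewrite -big_split /= -sum1_card natr_sum; apply: eq_bigr => A _.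
  by case: (f \in A) => /=; rewrite ?add0r ?addr0.
have eq1 : ('C(F.-1, L))%:R / ('C(F, L))%:R = 1 - L%:R / F%:R :> R.
  have Fn : (F%:R : R) != 0 by rewrite pnatr_eq0 -lt0n.
  have Cn : ('C(F, L)%:R : R) != 0 by rewrite pnatr_eq0 -lt0n.
  have := congr1 (fun x : nat => (x%:R : R)) hd; rewrite /= !natrM natrB //.
  move=> h; apply: (mulfI Fn); rewrite mulrA h; field; by rewrite Cn Fn.
have Cn : ('C(F, L)%:R : R) != 0 by rewrite pnatr_eq0 -lt0n.
rewrite -mulr_suml; case: b; last by rewrite hnot card_Dset eq1.
rewrite -(addrK (\sum_(A in Dset F L) (((f \in A) == false) : nat)%:R) (\sum_(A in Dset F L) (((f \in A) == true) : nat)%:R)).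
rewrite hall hnot card_Dset mulrBl divff // eq1; ring.
Qed.

Lemma prod_pair_red (R : realType) K N (H : 'I_K * 'I_N -> R) (n n' : 'I_N) :
  n != n' -> (forall u m, m != n -> m != n' -> H (u, m) = 1) ->
  \prod_p H p = \prod_u (H (u, n) * H (u, n')).
Proof.
move=> nn' H1.
transitivity (\prod_u \prod_m H (u, m)).
  by rewrite pair_bigA; apply: eq_bigr => -[].
apply: eq_bigr => u _.
rewrite (bigD1 n) //= (bigD1 n') //=; last by rewrite eq_sym.
rewrite big1 ?mulr1 // => m /andP [h1 h2].
exact: H1.
Qed.

Lemma prod_bool (R : realType) (I : finType) (b : pred I) :
  \prod_i ((b i : nat)%:R : R) = ([forall i, b i] : nat)%:R.
Proof.
case: (boolP [forall i, b i]) => [/forallP H|/forallPn [i Hi]].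
  by rewrite big1 // => i _; rewrite H.
by rewrite (bigD1 i) //= (negbTE Hi) mul0r.
Qed.

Lemma Sset_eq K N F (C : config K N F) n f T :
  (S_set C n f == T) = [forall u, (f \in C (u, n)) == (u \in T)].
Proof.
apply/eqP/forallP => [<- u|H]; first by rewrite inE.
by apply/setP => u; rewrite inE; apply/eqP.
Qed.

Definition rho (R : realType) (p : R) (b : bool) := if b then p else 1 - p.

Lemma exp_ind (R : realType) K N F L (n n' : 'I_N) (f g : 'I_F) (T T' : {set 'I_K}) :
  n != n' -> (L <= F)%N ->
  (\sum_(C in old_placement K N F L)
     (((S_set C n f == T) && (S_set C n' g == T')) : nat)%:R)
    / #|old_placement K N F L|%:R
  = \prod_u (rho (L%:R / F%:R : R) (u \in T) * rho (L%:R / F%:R) (u \in T')).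
Proof.
move=> nn' hLF.
pose G (p : 'I_K * 'I_N) (A : {set 'I_F}) : R :=
  if p.2 == n then (((f \in A) == (p.1 \in T)) : nat)%:R
  else if p.2 == n' then (((g \in A) == (p.1 \in T')) : nat)%:R else 1.
have hG : forall u m, m != n -> m != n' -> forall A, G (u, m) A = 1.
  by move=> u m h1 h2 A; rewrite /G /= (negbTE h1) (negbTE h2).
have n'n : (n' == n) = false by rewrite eq_sym (negbTE nn').
transitivity ((\sum_(C in old_placement K N F L) \prod_p G p (C p))
    / #|old_placement K N F L|%:R).
  congr (_ / _); apply: eq_bigr => C _.
  rewrite (@prod_pair_red R K N (fun p => G p (C p)) n n' nn') ?big_split /=; last first.
    by move=> u m h1 h2; apply: hG.
  rewrite /G /= !eqxx n'n !prod_bool -!Sset_eq -natrM mulnb.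
  by [].
rewrite exp_prod (prod_pair_red nn'); last first.
  move=> u m h1 h2; rewrite -mulr_suml (eq_bigr (fun=> 1)); last by move=> A _; rewrite hG.
  by rewrite sumr_const divff // pnatr_eq0 -lt0n card_Dset bin_gt0.
apply: eq_bigr => u _; rewrite /G /= !eqxx n'n !avg_ind //.
Qed.

Local Close Scope ring_scope.

Lemma max_lemma (I : finType) (S : {set I}) (a : I -> nat) : S != finset.set0 ->
  (\sum_(k in S) a k <= \max_(k in S) a k +
     \sum_(j in S) \sum_(k in S | k != j) a j * a k)%N.
Proof.
move=> S0.
have [m mS Hm] : {m | m \in S & \max_(k in S) a k = a m}.
  by apply: eq_bigmax_cond; rewrite card_gt0.
rewrite Hm (bigD1 m) //= leq_add2l [in X in _ <= X](bigD1 m) //=.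
apply: (leq_trans _ (leq_addr _ _)).
apply: leq_sum => k /andP [kS _].
have : (a k <= a m)%N by rewrite -Hm; apply: leq_bigmax_cond.
case: (a m) => [|am]; first by rewrite leqn0 => /eqP ->.
by move=> _; rewrite leq_pmull.
Qed.

Lemma card_V K N F (C : config K N F) d k T :
  #|V_set C d k T| = (\sum_f ((S_set C (d k) f == T) : nat))%N.
Proof. by rewrite /V_set -sum1dep_card big_mkcond /=; apply: eq_bigr => f _; case: ifP. Qed.

Lemma inner_S K N F (C : config K N F) (n : 'I_N) (k : 'I_K) (f : 'I_F) :
  (\sum_(S : {set 'I_K} | k \in S) ((S_set C n f == S :\ k) : nat))%N = (f \notin C (k, n)).
Proof.
have kS : (k \in S_set C n f) = (f \in C (k, n)) by rewrite inE.
case: (boolP (k \in S_set C n f)) => H.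
  rewrite -kS H /= big1 // => S _; case: eqP => // E.
  by move: H; rewrite E !inE eqxx.
rewrite -kS H (bigD1 (k |: S_set C n f)) ?setU11 //= setU1K // eqxx /= big1 // => S /andP [kS' ne].
case: eqP => // E; exfalso; move/eqP: ne; apply.
by rewrite E finset.setD1K.
Qed.

Lemma singles K N F L (C : config K N F) (d : 'I_K -> 'I_N) :
  C \in old_placement K N F L ->
  (\sum_(S : {set 'I_K} | S != finset.set0) \sum_(k in S) #|V_set C d k (S :\ k)|)%N = (K * (F - L))%N.
Proof.
move=> CP.
have -> : (\sum_(S : {set 'I_K} | S != finset.set0) \sum_(k in S) #|V_set C d k (S :\ k)|)%N
   = (\sum_(S : {set 'I_K}) \sum_(k in S) #|V_set C d k (S :\ k)|)%N.
  by rewrite [RHS](bigD1 finset.set0) //= big_set0 add0n.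
under eq_bigr do rewrite big_mkcond /=.
rewrite exchange_big /=.
under eq_bigr do rewrite -big_mkcond /=.
rewrite -[K in RHS]card_ord -sum_nat_const; apply: eq_bigr => k _.
under eq_bigr do rewrite card_V.
rewrite exchange_big /=.
under eq_bigr do rewrite inner_S.
move: CP; rewrite inE => /forallP /(_ (k, d k)) /eqP <-.
have h := cardsC (C (k, d k)); rewrite card_ord in h.
transitivity #|~: C (k, d k)|; last first.
  by move: h; generalize #|C (k, d k)| #|~: C (k, d k)| => a b h; rewrite -h addKn.
rewrite -sum1_card [RHS]big_mkcond /=.
by apply: eq_bigr => f _; rewrite inE; case: (f \in C (k, d k)).
Qed.

Local Open Scope ring_scope.

Local Open Scope ring_scope.

Lemma subset_prod (R : realType) (I : finType) (h : I -> bool -> R) :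
  \sum_(S : {set I}) \prod_i h i (i \in S) = \prod_i (h i true + h i false).
Proof.
have -> : \prod_i (h i true + h i false) = \prod_i \sum_(b : bool) h i b.
  by apply: eq_bigr => i _; rewrite big_bool.
rewrite bigA_distr_bigA /=.
rewrite (reindex (fun w : {ffun I -> bool} => [set i | w i])) /=.
  by apply: eq_bigr => w _; apply: eq_bigr => i _; rewrite inE.
apply: onW_bij; exists (fun S : {set I} => [ffun i => i \in S]).
  by move=> w; apply/ffunP => i; rewrite ffunE inE.
by move=> S; apply/setP => i; rewrite inE ffunE.
Qed.

Lemma pair_S (R : realType) K (j k : 'I_K) (p : R) : j != k ->
  \sum_(S : {set 'I_K}) (if (j \in S) && (k \in S) then
     \prod_u (rho p (u \in S :\ j) * rho p (u \in S :\ k)) else 0)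
  = (p * (1 - p)) ^+ 2 * (p * p + (1 - p) * (1 - p)) ^+ (K - 2).
Proof.
move=> jk.
pose h (u : 'I_K) (b : bool) : R :=
  if u == j then (if b then (1 - p) * p else 0)
  else if u == k then (if b then p * (1 - p) else 0)
  else (if b then p * p else (1 - p) * (1 - p)).
transitivity (\sum_(S : {set 'I_K}) \prod_u h u (u \in S)).
  apply: eq_bigr => S _.
  case: (boolP (j \in S)) => jS; last first.
    by rewrite /= (bigD1 j) //= /h eqxx (negbTE jS) mul0r.
  case: (boolP (k \in S)) => kS; last first.
    by rewrite /= (bigD1 k) //= /h eqxx eq_sym (negbTE jk) (negbTE kS) mul0r.
  rewrite /=; apply: eq_bigr => u _; rewrite /h /rho !inE.
  case: (eqVneq u j) => [->|uj] /=; first by rewrite jk jS.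
  case: (eqVneq u k) => [->|uk] /=; first by rewrite kS.
  by case: (u \in S).
have kj : (k == j) = false by rewrite eq_sym (negbTE jk).
rewrite subset_prod (bigD1 j) //= (bigD1 k) /=; last by rewrite kj.
rewrite /h !eqxx kj /=.
rewrite (eq_bigr (fun _ => p * p + (1 - p) * (1 - p))); last first.
  by move=> u /andP [uj uk]; rewrite (negbTE uj) (negbTE uk).
rewrite prodr_const.
have -> : #|[pred i | (i != j) && (i != k)]| = (K - 2)%N.
  have -> : #|[pred i | (i != j) && (i != k)]| = #|~: [set j; k]|.
    by apply: eq_card => i; rewrite !inE negb_or.
  have := cardsC [set j; k]; rewrite cards2 jk card_ord.
  by generalize #|~: [set j; k]| => a <-; rewrite addKn.
rewrite !addr0; ring.
Qed.

Local Open Scope ring_scope.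

Lemma alg_core (R : realType) (F p Kr E2 Y Z r : R) :
  0 < p -> p <= 1 -> 0 < F -> 1 <= Kr -> 0 < E2 -> 0 <= Y -> 0 <= Z ->
  Y * Z <= 1 -> E2 * r <= 1 -> p * (1 - p) ^+ 2 <= r ->
  2 * p * Kr * F <= (1 - p) * E2 * Y ->
  F * (Kr * (Kr - 1)) * ((p * (1 - p)) ^+ 2 * Z) <= Kr * (1 - p) / 2.
Proof.
move=> p0 p1 F0 K1 E0 Y0 Z0 YZ Er pr hF.
have q0 : 0 <= (Kr - 1) * (p * (1 - p)) ^+ 2 * Z.
  by apply: mulr_ge0; [apply: mulr_ge0; [lra| apply: exprn_ge0; nra]|].
have s1 : 2 * p * (F * (Kr * (Kr - 1)) * ((p * (1 - p)) ^+ 2 * Z))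
   <= (1 - p) * E2 * Y * ((Kr - 1) * (p * (1 - p)) ^+ 2 * Z).
  have := ler_wpM2r q0 hF; apply: le_trans; rewrite le_eqVlt; apply/orP; left; apply/eqP; ring.
have s2 : (1 - p) * E2 * Y * ((Kr - 1) * (p * (1 - p)) ^+ 2 * Z)
   <= (1 - p) * E2 * ((Kr - 1) * (p * (1 - p)) ^+ 2).
  have h0 : 0 <= (1 - p) * E2 * ((Kr - 1) * (p * (1 - p)) ^+ 2).
    by apply: mulr_ge0; [apply: mulr_ge0; lra|apply: mulr_ge0; [lra|apply: exprn_ge0; nra]].
  have := ler_wpM2l h0 YZ; rewrite mulr1; apply: le_trans; rewrite le_eqVlt; apply/orP; left; apply/eqP; ring.
have s3 : E2 * (p * (1 - p)) ^+ 2 <= p.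
  have : E2 * (p * (1 - p) ^+ 2) <= 1.
    by apply: le_trans Er; apply: ler_wpM2l; lra.
  move=> h; have := ler_wpM2l (ltW p0) h; rewrite mulr1; apply: le_trans.
  rewrite le_eqVlt; apply/orP; left; apply/eqP; ring.
have s4 : (1 - p) * E2 * ((Kr - 1) * (p * (1 - p)) ^+ 2) <= (1 - p) * (Kr - 1) * p.
  have h0 : 0 <= (1 - p) * (Kr - 1) by apply: mulr_ge0; lra.
  have := ler_wpM2l h0 s3; apply: le_trans; rewrite le_eqVlt; apply/orP; left; apply/eqP; ring.
set X := F * (Kr * (Kr - 1)) * ((p * (1 - p)) ^+ 2 * Z) in s1 *.
have : 2 * p * X <= (1 - p) * (Kr - 1) * p by lra.
move=> h.
have : 2 * p * X <= 2 * p * (Kr * (1 - p) / 2) by nra.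
by rewrite ler_pM2l; last lra.
Qed.

Lemma final_real (R : realType) (K : nat) (p F : R) :
  (0 < K)%N -> 0 < p -> p <= 1 -> 0 < F ->
  F <= (1 / p) / (2 * K%:R) * (1 - p) * expR (2 * (p * (1 - p)) * (K%:R - 1)) ->
  F * (K%:R * (K%:R - 1)) * ((p * (1 - p)) ^+ 2 * (p * p + (1 - p) * (1 - p)) ^+ (K - 2))
   <= K%:R * (1 - p) / 2.
Proof.
case: K => // -[|k] _ p0 p1 F0 hF.
  rewrite subrr !mulr0 mul0r; apply: divr_ge0; [apply: mulr_ge0|]; lra.
set E2 := expR (2 * (p * (1 - p))).
set r := p * p + (1 - p) * (1 - p).
have E0 : 0 < E2 by apply: expR_gt0.
have Er : E2 * r <= 1.
  have h1 : r <= expR (- (2 * (p * (1 - p)))).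
    have := expR_ge1Dx (- (2 * (p * (1 - p)))); apply: le_trans.
    rewrite /r le_eqVlt; apply/orP; left; apply/eqP; ring.
  have := ler_wpM2l (ltW E0) h1; rewrite /E2 expRxMexpNx_1; by [].
have r0 : 0 <= r by rewrite /r; nra.
have hK : ((k.+2)%:R : R) - 1 = (k.+1)%:R by rewrite -[k.+2]addn1 natrD addrK.
rewrite hK expRM_natr exprS -/E2 in hF.
have K0 : 0 < ((k.+2)%:R : R) by rewrite ltr0n.
rewrite (_ : (k.+2 - 2)%N = k); last by rewrite -addn2 addnK.
apply: (@alg_core R F p ((k.+2)%:R) E2 (E2 ^+ k) (r ^+ k) r) => //.
- by rewrite ler1n.
- by apply: exprn_ge0; apply: ltW.
- by apply: exprn_ge0.
- by rewrite -exprMn; apply: exprn_ile1 => //; apply: mulr_ge0 => //; apply: ltW.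
- have h3 : 0 <= (1 - p) * (1 - p) * (1 - p) by apply: mulr_ge0; [apply: mulr_ge0|]; lra.
  by rewrite /r expr2; nra.
- have h2 : 0 < 2 * p * (k.+2)%:R by apply: mulr_gt0 => //; apply: mulr_gt0 => //; lra.
  have e : 1 / p / (2 * (k.+2)%:R) * (1 - p) * (E2 * E2 ^+ k) * (2 * p * (k.+2)%:R)
     = (1 - p) * E2 * E2 ^+ k.
    by field; apply/andP; split; [rewrite gt_eqF|lra].
  have := ler_wpM2r (ltW h2) hF; rewrite e => h.
  by rewrite mulrC.
Qed.

Local Open Scope ring_scope.

Definition pairN K N F (C : config K N F) (d : 'I_K -> 'I_N) : nat :=
  (\sum_(S : {set 'I_K} | S != finset.set0) \sum_(j in S) \sum_(k in S | k != j)
     (#|V_set C d j (S :\ j)| * #|V_set C d k (S :\ k)|))%N.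

Lemma stepB (R : realType) K N F L (C : config K N F) (d : 'I_K -> 'I_N) :
  (0 < F)%N -> C \in old_placement K N F L ->
  (K * (F - L))%:R - (pairN C d)%:R <= F%:R * Rnd R C d.
Proof.
move=> F0 CP.
have -> : F%:R * Rnd R C d = \sum_(S : {set 'I_K} | S != finset.set0)
     ((\max_(k in S) #|V_set C d k (S :\ k)|)%N)%:R.
  rewrite /Rnd mulr_sumr; apply: eq_bigr => S _.
  by rewrite mulrC divfK // pnatr_eq0 -lt0n.
rewrite -natr_sum lerBlDr -natrD ler_nat -(singles d CP) /pairN -big_split /=.
by apply: leq_sum => S S0; apply: max_lemma.
Qed.

Lemma swap_div (R : realType) (I J : finType) (P : pred I) (Q : pred J)
  (X : I -> J -> R) (c : R) :
  (\sum_(i | P i) \sum_(j | Q j) X i j) / c = \sum_(j | Q j) (\sum_(i | P i) X i j) / c.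
Proof. by rewrite exchange_big mulr_suml. Qed.

Lemma reorg (R : realType) K (Y : {set 'I_K} -> 'I_K -> 'I_K -> R) :
  \sum_(S : {set 'I_K} | S != finset.set0) \sum_(j in S) \sum_(k in S | k != j) Y S j k
  = \sum_j \sum_(k | k != j) \sum_(S : {set 'I_K})
        (if (j \in S) && (k \in S) then Y S j k else 0).
Proof.
have -> : \sum_(S : {set 'I_K} | S != finset.set0) \sum_(j in S) \sum_(k in S | k != j) Y S j k
   = \sum_(S : {set 'I_K}) \sum_(j in S) \sum_(k in S | k != j) Y S j k.
  by rewrite [RHS](bigD1 finset.set0) //= big_set0 add0r.
transitivity (\sum_(S : {set 'I_K}) \sum_j \sum_k
   (if (j \in S) && (k \in S) && (k != j) then Y S j k else 0)).
  apply: eq_bigr => S _; rewrite big_mkcond /=; apply: eq_bigr => j _.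
  case: (boolP (j \in S)) => jS /=; last by rewrite big1 // => k; rewrite andbF.
  by rewrite big_mkcond /=; apply: eq_bigr => k _.
rewrite exchange_big /=; apply: eq_bigr => j _.
rewrite exchange_big /= [RHS]big_mkcond /=; apply: eq_bigr => k _.
case: (eqVneq k j) => [->|kj] /=; last by apply: eq_bigr => S _; rewrite andbT.
by rewrite big1 // => S _; rewrite andbF.
Qed.

Lemma stepC (R : realType) K N F L (d : 'I_K -> 'I_N) :
  injective d -> (L <= F)%N -> (0 < K)%N ->
  (\sum_(C in old_placement K N F L) ((pairN C d)%:R : R)) / #|old_placement K N F L|%:R
  = (F%:R ^+ 2) * (K%:R * (K%:R - 1)) *
    (((L%:R / F%:R) * (1 - L%:R / F%:R)) ^+ 2 *
     ((L%:R / F%:R) * (L%:R / F%:R) + (1 - L%:R / F%:R) * (1 - L%:R / F%:R)) ^+ (K - 2)).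
Proof.
move=> dI hLF K0.
set p : R := L%:R / F%:R.
set c := #|old_placement K N F L|%:R.
pose X (S : {set 'I_K}) (j k : 'I_K) :=
  \prod_u (rho p (u \in S :\ j) * rho p (u \in S :\ k)).
have C1 : forall C : config K N F, (pairN C d)%:R =
  \sum_(S : {set 'I_K} | S != finset.set0) \sum_(j in S) \sum_(k in S | k != j)
   \sum_(f : 'I_F) \sum_(g : 'I_F)
    (((S_set C (d j) f == S :\ j) && (S_set C (d k) g == S :\ k)) : nat)%:R :> R.
  move=> C; rewrite /pairN natr_sum; apply: eq_bigr => S _.
  rewrite natr_sum; apply: eq_bigr => j _; rewrite natr_sum; apply: eq_bigr => k _.
  rewrite natrM !card_V !natr_sum mulr_suml; apply: eq_bigr => f _.
  rewrite mulr_sumr; apply: eq_bigr => g _.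
  by rewrite -natrM mulnb.
rewrite (eq_bigr _ (fun C _ => C1 C)).
transitivity (\sum_(S : {set 'I_K} | S != finset.set0) \sum_(j in S) \sum_(k in S | k != j)
   \sum_(f : 'I_F) \sum_(g : 'I_F) X S j k).
  rewrite swap_div; apply: eq_bigr => S _.
  rewrite swap_div; apply: eq_bigr => j _.
  rewrite swap_div; apply: eq_bigr => k /andP [_ kj].
  rewrite swap_div; apply: eq_bigr => f _.
  rewrite swap_div; apply: eq_bigr => g _.
  apply: exp_ind => //.
  by apply: contra kj => /eqP /dI ->.
transitivity (\sum_(S : {set 'I_K} | S != finset.set0) \sum_(j in S) \sum_(k in S | k != j)
   (F%:R ^+ 2 * X S j k)).
  apply: eq_bigr => S _; apply: eq_bigr => j _; apply: eq_bigr => k _.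
  by rewrite !sumr_const card_ord -mulrnA -[X S j k *+ _]mulr_natl -natrX.
rewrite reorg.
transitivity (\sum_(j : 'I_K) \sum_(k | k != j) (F%:R ^+ 2 *
    ((p * (1 - p)) ^+ 2 * (p * p + (1 - p) * (1 - p)) ^+ (K - 2)))).
  apply: eq_bigr => j _; apply: eq_bigr => k kj.
  have jk : j != k by rewrite eq_sym.
  rewrite -(@pair_S R K j k p jk) mulr_sumr; apply: eq_bigr => S _.
  by case: ifP; rewrite ?mulr0.
set cc := (F%:R ^+ 2 * _).
transitivity (\sum_(j : 'I_K) cc *+ K.-1).
  apply: eq_bigr => j _.
  rewrite (eq_bigl (fun k => k \in [set~ j])); last by move=> k; rewrite in_setC1.
  by rewrite sumr_const cardsC1 card_ord.
rewrite sumr_const card_ord -mulrnA -[cc *+ _]mulr_natr /cc natrM -subn1 natrB //.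
ring.
Qed.

Unset Implicit Arguments.
Set Strict Implicit.
Theorem theorem5 (R : realType) (N K F L : nat) (M : R)
  (d : 'I_K -> 'I_N)
  (hNK : (K < N)%N) (hK : (0 < K)%N) (hF : (0 < F)%N)
  (hM0 : 0 < M) (hMN : M <= N%:R)
  (hL : M * F%:R / N%:R = L%:R)
  (hd : injective d)
  (hFbound : let t := K%:R * M / N%:R in
     F%:R <= (N%:R / M) / (2 * K%:R) * (1 - 1 / (N%:R / M))
             * expR (2 * t * (1 - t / K%:R) * (1 - 1 / K%:R))) :
  expected_Rnd R F L d >= 1 / 2 * (1 - M / N%:R) * K%:R.
Proof.
have N0 : (0 < N)%N := ltn_trans hK hNK.
have Nr : (0 : R) < N%:R by rewrite ltr0n.
have Fr : (0 : R) < F%:R by rewrite ltr0n.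
have Kr : (0 : R) < K%:R by rewrite ltr0n.
set p : R := L%:R / F%:R.
have hM : M = p * N%:R.
  rewrite /p -hL; field; by apply/andP; split; rewrite gt_eqF.
have hp : M / N%:R = p by rewrite hM mulfK // gt_eqF.
have p0 : 0 < p by rewrite -hp divr_gt0.
have p1 : p <= 1 by rewrite -hp ler_pdivrMr // mul1r.
have hLp : L%:R = p * F%:R by rewrite /p divfK // gt_eqF.
have hLF : (L <= F)%N by rewrite -(ler_nat R) hLp ler_piMl // ltW.
have hF2 : F%:R <= (1 / p) / (2 * K%:R) * (1 - p) * expR (2 * (p * (1 - p)) * (K%:R - 1)).
  move: hFbound => /=; rewrite hM.
  have e1 : N%:R / (p * N%:R) = 1 / p by field; apply/andP; split; rewrite gt_eqF.
  have e2 : 1 - 1 / (1 / p) = 1 - p by field; rewrite gt_eqF.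
  have e3 : 2 * (K%:R * (p * N%:R) / N%:R) * (1 - K%:R * (p * N%:R) / N%:R / K%:R) *
     (1 - 1 / K%:R) = 2 * (p * (1 - p)) * (K%:R - 1).
    by field; apply/andP; split; rewrite gt_eqF.
  by rewrite e1 e2 e3.
have fin := final_real hK p0 p1 Fr hF2.
rewrite hp /expected_Rnd.
set c := (#|old_placement K N F L|%:R : R).
have c0 : 0 < c.
  rewrite /c card_place; apply: prodr_gt0 => q _.
  by rewrite ltr0n card_Dset bin_gt0.
pose Q := (p * (1 - p)) ^+ 2 * (p * p + (1 - p) * (1 - p)) ^+ (K - 2).
have hC := @stepC R K N F L d hd hLF hK.
rewrite -/p -/c -/Q in hC.
have key : (K * (F - L))%:R - F%:R ^+ 2 * (K%:R * (K%:R - 1)) * Q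
   <= F%:R * ((\sum_(C in old_placement K N F L) Rnd R C d) / c).
  rewrite -hC mulrA mulr_sumr.
  have -> : (K * (F - L))%:R = (\sum_(C in old_placement K N F L) ((K * (F - L))%:R : R)) / c.
    by rewrite sumr_const -(mulr_natr ((K * (F - L))%:R : R)) -/c mulfK // gt_eqF.
  rewrite -mulrBl ler_pM2r ?invr_gt0 // -sumrB.
  by apply: ler_sum => C CP; apply: stepB.
have eK : ((K * (F - L))%:R : R) = K%:R * F%:R * (1 - p).
  by rewrite natrM natrB // hLp; ring.
rewrite eK in key.
rewrite -/Q in fin.
have : F%:R * (1 / 2 * (1 - p) * K%:R) <= F%:R * ((\sum_(C in old_placement K N F L) Rnd R C d) / c).
  apply: le_trans key.
  have := ler_wpM2l (ltW Fr) fin.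
  move=> h; rewrite expr2; nra.
by rewrite ler_pM2l.
Qed.
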